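(* Let $A$ be a Ritt algebra, i.e. a differential ring containing $\mathbb Q$, let $X=\operatorname{Spec}^\Delta A$, $\widehat A=\mathcal O(X)$, and let $\iota\colon A\to\widehat A$ be the canonical homomorphism. Then $\iota^*\colon\operatorname{Spec}^\Delta\widehat A\to\operatorname{Spec}^\Delta A$, $\mathfrak q\mapsto\iota^{-1}(\mathfrak q)$, is a homeomorphism.
   Context: All rings are commutative with unit. A differential ring is a ring with finitely many pairwise commuting derivations. $\operatorname{Spec}^\Delta R$ is the set of prime ideals of a differential ring $R$ closed under all derivations, with the Kolchin topology (closed sets $V(E)=\{\mathfrak p: E\subseteq\mathfrak p\}$). For $\mathfrak p\in X$, $A_{\mathfrak p}$ is the localization at $A\setminus\mathfrak p$. Structure sheaf: for open $U\subseteq X$, $\mathcal O(U)$ is the set of functions $f$ on $U$ with $f(\mathfrak p)\in A_{\mathfrak p}$ that are regular at every point of $U$, where $f$ is regular at $\mathfrak p$ if there exist an open neighborhood $W\subseteq U$ of $\mathfrak p$ and $a,b\in A$ with $b\notin\mathfrak q$ and $f(\mathfrak q)=a/b$ in $A_{\mathfrak q}$ for all $\mathfrak q\in W$; it is a differential ring with pointwise operations and derivations. The canonical differential homomorphism $\iota\colon A\to\mathcal O(X)$ sends $a$ to the function $\mathfrak p\mapsto a/1\in A_{\mathfrak p}$. *)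

(* Defs.v *)
From HB Require Import structures.
From mathcomp Require Import all_boot all_algebra.
Set Implicit Arguments. Unset Strict Implicit. Unset Printing Implicit Defensive.
Import GRing.Theory.
Local Open Scope ring_scope.

(** A carrier type [dcar], a membership predicate [dmem] singling out the
    elements of the ring inside the carrier (for [A] itself this is [True];
    for [O(X)] it is "regular section"), and the ring operations and the
    [m] derivations.  No axioms are imposed: the record is only instantiated
    with genuine differential rings (A itself and O(X) with its pointwise
    operations), and serves to define Spec^Delta uniformly. *)
Record dring (m : nat) := DRing {
  dcar : Type;
  dmem : dcar -> Prop;
  dzero : dcar;
  done : dcar;
  dadd : dcar -> dcar -> dcar;
  dopp : dcar -> dcar;
  dmul : dcar -> dcar -> dcar;
  dder : 'I_m -> dcar -> dcar }.

Definition is_dprime m (D : dring m) (P : dcar D -> Prop) : Prop :=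
  (forall x, P x -> dmem x) /\
  P (dzero D) /\
  (forall x y, P x -> P y -> P (dadd x y)) /\
  (forall x, P x -> P (dopp x)) /\
  (forall r x, dmem r -> P x -> P (dmul r x)) /\
  ~ P (done D) /\
  (forall x y, dmem x -> dmem y -> P (dmul x y) -> P x \/ P y) /\
  (forall i x, P x -> P (dder i x)).

Definition dspec m (D : dring m) := {P : dcar D -> Prop | @is_dprime m D P}.

Definition kclosed m (D : dring m) (C : dspec D -> Prop) : Prop :=
  exists E : dcar D -> Prop, forall P : dspec D, C P <-> (forall x, E x -> sval P x).
Definition kopen m (D : dring m) (U : dspec D -> Prop) : Prop :=
  kclosed (fun P => ~ U P).

Definition kcontinuous m1 m2 (D1 : dring m1) (D2 : dring m2)
  (f : dspec D1 -> dspec D2) : Prop :=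
  forall U, kopen U -> kopen (fun x => U (f x)).

Definition khomeomorphism m1 m2 (D1 : dring m1) (D2 : dring m2)
  (f : dspec D1 -> dspec D2) : Prop :=
  exists g : dspec D2 -> dspec D1,
    [/\ (forall x, g (f x) = x), (forall y, f (g y) = y),
        kcontinuous f & kcontinuous g].

Definition is_derivation (R : comNzRingType) (D : R -> R) : Prop :=
  (forall x y, D (x + y) = D x + D y) /\ (forall x y, D (x * y) = D x * y + x * D y).

Definition is_diff_ring (R : comNzRingType) m (d : 'I_m -> R -> R) : Prop :=
  (forall i, is_derivation (d i)) /\ (forall i j x, d i (d j x) = d j (d i x)).

(** Ritt algebra: contains Q, i.e. every positive integer is invertible. *)
Definition ritt (R : comNzRingType) : Prop := forall n : nat, exists y : R, (n.+1)%:R * y = 1.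

Definition ring_dring (R : comNzRingType) m (d : 'I_m -> R -> R) : dring m :=
  @DRing m R (fun _ => True) 0 1 +%R -%R *%R d.

Section StructureSheaf.
Variables (R : comNzRingType) (m : nat) (d : 'I_m -> R -> R).

Definition Xsp := dspec (ring_dring d).

(** The element a/s of the localization A_p, as an equivalence class of pairs. *)
Definition lclass (p : R -> Prop) (a s : R) : R * R -> Prop :=
  fun bt => ~ p bt.2 /\ exists u, ~ p u /\ u * (a * bt.2 - bt.1 * s) = 0.

Definition in_stalk (p : Xsp) (c : R * R -> Prop) : Prop :=
  exists a s, ~ sval p s /\ c = lclass (sval p) a s.

Definition rsec := Xsp -> (R * R -> Prop).

Definition regular_at (U : Xsp -> Prop) (f : rsec) (p : Xsp) : Prop :=
  exists W : Xsp -> Prop, [/\ kopen W, W p, (forall q, W q -> U q) &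
    exists a b, forall q, W q -> ~ sval q b /\ f q = lclass (sval q) a b].

(** f in O(U) (values outside U are irrelevant). *)
Definition in_OU (U : Xsp -> Prop) (f : rsec) : Prop :=
  forall p, U p -> in_stalk p (f p) /\ regular_at U f p.

Definition in_OX (f : rsec) : Prop := in_OU (fun _ => True) f.

Definition lift2 (op : R -> R -> R -> R -> R * R) (p : R -> Prop)
  (c1 c2 : R * R -> Prop) : R * R -> Prop :=
  fun xy => exists a s b t, [/\ ~ p s, ~ p t, c1 = lclass p a s, c2 = lclass p b t
                & lclass p (op a s b t).1 (op a s b t).2 xy].
Definition lift1 (op : R -> R -> R * R) (p : R -> Prop)
  (c : R * R -> Prop) : R * R -> Prop :=
  fun xy => exists a s, [/\ ~ p s, c = lclass p a s
                & lclass p (op a s).1 (op a s).2 xy].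

Definition cadd := lift2 (fun a s b t => (a * t + b * s, s * t)).
Definition cmul := lift2 (fun a s b t => (a * b, s * t)).
Definition copp := lift1 (fun a s => (- a, s)).
Definition cder (i : 'I_m) := lift1 (fun a s => (d i a * s - a * d i s, s * s)).

Definition OX_dring : dring m :=
  @DRing m rsec in_OX
    (fun q => lclass (sval q) 0 1)
    (fun q => lclass (sval q) 1 1)
    (fun f g q => cadd (sval q) (f q) (g q))
    (fun f q => copp (sval q) (f q))
    (fun f g q => cmul (sval q) (f q) (g q))
    (fun i f q => cder i (sval q) (f q)).

Definition canon_iota (a : R) : rsec := fun q => lclass (sval q) a 1.

End StructureSheaf.
Arguments canon_iota {R m} d a _ _.

(* Main.v *)
Require Import Defs.
From HB Require Import structures.
From mathcomp Require Import all_boot all_algebra.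
From Stdlib Require Import Ring Classical FunctionalExtensionality PropExtensionality ProofIrrelevance ClassicalEpsilon.
Set Implicit Arguments. Unset Strict Implicit. Unset Printing Implicit Defensive.
Import GRing.Theory.
Local Open Scope ring_scope.


Section Zorn.
Variable T : Type.
Variable Fam : (T -> Prop) -> Prop.
Variable J : T -> Prop.
Hypothesis FamJ : Fam J.
Definition zsub (K L : T -> Prop) := forall z, K z -> L z.
Definition zchain (C : (T -> Prop) -> Prop) := forall K L, C K -> C L -> zsub K L \/ zsub L K.
Definition zunion (C : (T -> Prop) -> Prop) : T -> Prop := fun z => exists K, C K /\ K z.
Hypothesis Famub : forall C, (forall K, C K -> Fam K) -> zchain C -> (exists K, C K) -> Fam (zunion C).
Hypothesis FamJsub : forall K, Fam K -> zsub J K.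

Lemma set_ext (K L : T -> Prop) : zsub K L -> zsub L K -> K = L.
Proof. move=> h1 h2; apply: functional_extensionality => x; apply: propositional_extensionality; split; [exact: h1|exact: h2]. Qed.

Section NoMax.
Variable next : (T -> Prop) -> (T -> Prop).
Hypothesis nextF : forall K, Fam K -> Fam (next K).
Hypothesis nextI : forall K, zsub K (next K).
Hypothesis nextS : forall K, Fam K -> ~ zsub (next K) K.

Definition tow (K : T -> Prop) := forall P : (T -> Prop) -> Prop, P J ->
  (forall K, P K -> P (next K)) ->
  (forall C, (forall K, C K -> P K) -> zchain C -> (exists K, C K) -> P (zunion C)) -> P K.

Lemma towJ : tow J. Proof. rewrite /tow; by move=> P h1 h2 h3. Qed.
Lemma tow_next K : tow K -> tow (next K).
Proof. move=> hK; rewrite /tow => P h1 h2 h3; exact: (h2 _ (hK P h1 h2 h3)). Qed.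
Lemma tow_union C : (forall K, C K -> tow K) -> zchain C -> (exists K, C K) -> tow (zunion C).
Proof. move=> hC hch hne; rewrite /tow => P h1 h2 h3; apply: (h3) => // K CK; exact: (hC K CK P h1 h2 h3). Qed.
Lemma tow_ind (P : (T -> Prop) -> Prop) : P J ->
  (forall K, tow K -> P K -> P (next K)) ->
  (forall C, (forall K, C K -> tow K /\ P K) -> zchain C -> (exists K, C K) -> P (zunion C)) ->
  forall K, tow K -> P K.
Proof.
move=> h1 h2 h3 K hK.
suff: tow K /\ P K by case.
apply: (hK (fun K => tow K /\ P K)).
- split; [exact: towJ|exact: h1].
- move=> L [hL pL]; split; [exact: tow_next|exact: h2].
- move=> C hC hch hne; split; first by apply: tow_union => // L /hC [].
  exact: h3.
Qed.
Lemma towF K : tow K -> Fam K.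
Proof. move: K; apply: tow_ind => //.
- move=> K _; exact: nextF.
- move=> C hC hch hne; apply: Famub => // L /hC []; done. Qed.

Definition extreme c := forall L, tow L -> zsub L c -> zsub c L \/ zsub (next L) c.

Lemma lemma1 c : tow c -> extreme c -> forall L, tow L -> zsub L c \/ zsub (next c) L.
Proof.
move=> tc ec; apply: tow_ind.
- left; apply: FamJsub; exact: towF.
- move=> L tL [h|h].
  + case: (ec L tL h) => h'.
    * have -> : c = L by apply: set_ext.
      by right.
    * by left.
  + right => z /h; exact: nextI.
- move=> C hC hch hne.
  case: (classic (exists L, C L /\ zsub (next c) L)) => [[L [CL hL]]|hn].
  + right => z /hL Lz; by exists L.
  + left => z [L [CL Lz]].
    case: (proj2 (hC L CL)) => h; first exact: h.
    by exfalso; apply: hn; exists L.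
Qed.

Lemma lemma2 c : tow c -> extreme c.
Proof.
move: c; apply: tow_ind.
- move=> L tL h; left; apply: FamJsub; exact: towF.
- move=> c tc ec L tL hL.
  case: (lemma1 tc ec tL) => h.
  + case: (ec L tL h) => h'.
    * have -> : c = L by apply: set_ext.
      by right.
    * right => z /h'; exact: nextI.
  + left; exact: h.
- move=> C hC hch hne L tL hL.
  case: (classic (forall c, C c -> zsub (next c) L)) => hA.
  + left => z [c [Cc cz]]; apply: (hA c Cc); exact: nextI.
  + have [c [Cc hc]] : exists c, C c /\ ~ zsub (next c) L.
      apply: NNPP => hn; apply: hA => c Cc; apply: NNPP => h; apply: hn; by exists c.
    case: (hC c Cc) => tc ec.
    have Lc : zsub L c by case: (lemma1 tc ec tL) => // h.
    case: (ec L tL Lc) => h.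
    * have eLc : c = L by apply: set_ext.
      case: (classic (exists c', C c' /\ zsub (next c) c')) => [[c' [Cc' h']]|hn].
      -- right => z; rewrite -eLc => /h' zc'; by exists c'.
      -- left => z [c' [Cc' c'z]].
         case: (hC c' Cc') => tc' _.
         case: (lemma1 tc ec tc') => h2.
         ++ rewrite -eLc; exact: h2 _ c'z.
         ++ by exfalso; apply: hn; exists c'.
    * right => z /h cz; by exists c.
Qed.

Lemma tow_chain : zchain tow.
Proof.
move=> K L tK tL.
case: (lemma1 tK (lemma2 tK) tL) => h; [by right|left => z /nextI; exact: h].
Qed.

Lemma nomax_false : False.
Proof.
have tU : tow (zunion tow) by apply: tow_union => //; [exact: tow_chain| exists J; exact: towJ].
apply: (nextS (towF tU)) => z hz; exists (next (zunion tow)); split => //; exact: tow_next.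
Qed.
End NoMax.

Lemma zorn : exists M, Fam M /\ forall K, Fam K -> zsub M K -> zsub K M.
Proof.
apply: NNPP => hn.
have H : forall M, exists K, Fam M -> Fam K /\ zsub M K /\ ~ zsub K M.
  move=> M; case: (classic (Fam M)) => hM; last by exists M.
  apply: NNPP => h2; apply: hn; exists M; split => // K FK MK; apply: NNPP => KM.
  apply: h2; exists K => _; done.
pose next := fun M => proj1_sig (constructive_indefinite_description _ (H M)).
have hnext : forall M, Fam M -> Fam (next M) /\ zsub M (next M) /\ ~ zsub (next M) M.
  move=> M; exact: (proj2_sig (constructive_indefinite_description _ (H M))).
pose next' := fun M => fun z => M z \/ (Fam M /\ next M z).
apply: (@nomax_false next').
- move=> K FK; have -> : next' K = next K; last by case: (hnext K FK).
  apply: set_ext => z.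
  + case=> [kz|[_ nz]] //. by case: (hnext K FK) => _ [h _]; apply: h.
  + move=> nz; right; done.
- by move=> K z kz; left.
- move=> K FK h; apply: (proj2 (proj2 (hnext K FK))) => z nz; apply: h; right; done.
Qed.
End Zorn.

Section Main.
Variables (R : comNzRingType) (m : nat) (d : 'I_m -> R -> R).
Hypotheses (hd : is_diff_ring d) (hQ : ritt R).

Definition radd (x y : R) : R := x + y.
Definition rmul (x y : R) : R := x * y.
Definition ropp (x : R) : R := - x.
Definition rzero : R := 0.
Definition rone : R := 1.
Definition rexp (x : R) (n : nat) : R := x ^+ n.
Definition rnatmul (x : R) (n : nat) : R := x *+ n.
Lemma rth : @ring_theory R rzero rone radd rmul (fun x y => radd x (ropp y)) ropp eq.
Proof.
rewrite /radd/rmul/ropp/rzero/rone.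
split; [exact: add0r|exact: addrC|exact: addrA|exact: mul1r|exact: mulrC|exact: mulrA|exact: mulrDl|by []|exact: subrr].
Qed.
Add Ring Rring : rth.
Ltac rnorm :=
  repeat match goal with
  | |- context [@GRing.exp ?i ?x ?n] => change (@GRing.exp i x n) with (rexp x n)
  | |- context [@GRing.natmul ?i ?x ?n] => change (@GRing.natmul i x n) with (rnatmul x n)
  | |- context [@Algebra.add ?i ?x ?y] => change (@Algebra.add i x y) with (radd x y)
  | |- context [@GRing.mul ?i ?x ?y] => change (@GRing.mul i x y) with (rmul x y)
  | |- context [@Algebra.opp ?i ?x] => change (@Algebra.opp i x) with (ropp x)
  | |- context [@Algebra.zero ?i] => change (@Algebra.zero i) with rzero
  | |- context [@GRing.one ?i] => change (@GRing.one i) with rone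
  end;
  match goal with |- @eq _ ?x ?y => change (@eq (GRing.ComNzRing.sort R) x y) | _ => idtac end.
Ltac rring := rnorm; ring.

Lemma pred_ext (T : Type) (P Q : T -> Prop) : (forall x, P x <-> Q x) -> P = Q.
Proof. move=> h; apply: functional_extensionality => x; apply: propositional_extensionality; exact: h. Qed.

Lemma dD i x y : d i (x + y) = d i x + d i y.
Proof. by case: hd => h _; case: (h i). Qed.
Lemma dM i x y : d i (x * y) = d i x * y + x * d i y.
Proof. by case: hd => h _; case: (h i). Qed.
Lemma d0 i : d i 0 = 0.
Proof. have h := dD i 0 0; rewrite addr0 in h. apply: (addrI (d i 0)). by rewrite addr0 -h. Qed.
Lemma dN i x : d i (- x) = - d i x.
Proof. apply/eqP; rewrite -subr_eq0 opprK -dD addrC subrr; by rewrite d0. Qed.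
Lemma dB i x y : d i (x - y) = d i x - d i y.
Proof. by rewrite dD dN. Qed.
Lemma d1 i : d i 1 = 0.
Proof. have h := dM i 1 1; rewrite !(mulr1, mul1r) in h. apply: (addrI (d i 1)). by rewrite addr0 -h. Qed.
Lemma dX i x n : d i (x ^+ n.+1) = n.+1%:R * x ^+ n * d i x.
Proof.
elim: n => [|n IH]; first by rewrite expr1 expr0 mulr1 mul1r.
rewrite exprS dM IH exprS -(natr1 n.+1). rnorm. ring.
Qed.
Lemma dXm i y n : y * d i (y ^+ n) = n%:R * y ^+ n * d i y.
Proof.
case: n => [|n]; first by rewrite expr0 d1 mulr0 !mul0r.
rewrite dX exprS. rnorm. ring.
Qed.

Definition is_di (J : R -> Prop) := J 0 /\ (forall x y, J x -> J y -> J (x + y)) /\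
  (forall r x, J x -> J (r * x)) /\ (forall i x, J x -> J (d i x)).

Section DIfacts.
Variable J : R -> Prop.
Hypothesis hJ : is_di J.
Lemma di0 : J 0. Proof. by case: hJ. Qed.
Lemma diD x y : J x -> J y -> J (x + y). Proof. case: hJ => _ [h _]; exact: h. Qed.
Lemma diM r x : J x -> J (r * x). Proof. case: hJ => _ [_ [h _]]; exact: h. Qed.
Lemma diMr r x : J x -> J (x * r). Proof. rewrite mulrC; exact: diM. Qed.
Lemma diDer i x : J x -> J (d i x). Proof. case: hJ => _ [_ [_ h]]; exact: h. Qed.
Lemma diN x : J x -> J (- x). Proof. move=> h; rewrite -mulN1r; exact: diM. Qed.
Lemma diB x y : J x -> J y -> J (x - y). Proof. move=> h1 h2; apply: diD => //; exact: diN. Qed.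
Lemma diX x n : J x -> J (x ^+ n.+1). Proof. move=> h; rewrite exprSr; exact: diM. Qed.
Lemma diXle x n k : (n <= k)%N -> J (x ^+ n) -> J (x ^+ k).
Proof. move=> le h; rewrite -(subnK le) exprD; exact: diM. Qed.
Lemma di_sum (I : Type) (r : seq I) (P : pred I) (F : I -> R) :
  (forall i, P i -> J (F i)) -> J (\sum_(i <- r | P i) F i).
Proof. move=> h; apply: big_ind => //; [exact: di0|exact: diD]. Qed.
Lemma diMn x k : J x -> J (x *+ k). Proof. move=> h; rewrite -mulr_natl; exact: diM. Qed.
End DIfacts.

Definition DI (S : R -> Prop) (z : R) := forall J, is_di J -> (forall y, S y -> J y) -> J z.
Lemma DI_di S : is_di (DI S).
Proof.
split; first by move=> J hJ _; exact: di0.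
split; first by move=> x y hx hy J hJ hS; apply: diD => //; [exact: hx|exact: hy].
split; first by move=> r x hx J hJ hS; apply: diM => //; exact: hx.
by move=> i x hx J hJ hS; apply: diDer => //; exact: hx.
Qed.
Lemma DI_incl S y : S y -> DI S y. Proof. by move=> h J _ hS; apply: hS. Qed.
Lemma DI_min S J z : is_di J -> (forall y, S y -> J y) -> DI S z -> J z.
Proof. by move=> hJ hS h; apply: h. Qed.

Definition rad (J : R -> Prop) x := exists n, J (x ^+ n).

Lemma di_rad_der J i a z : is_di J -> (forall x, J (x ^+ 2) -> J x) ->
  J (a * z) -> J (a * d i z).
Proof.
move=> hJ hr haz; apply: hr.
have e : (a * d i z) ^+ 2 = (a * d i z) * d i (a * z) - (d i a * d i z) * (a * z).
  rewrite dM expr2. rnorm. ring.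
rewrite e; apply: diB => //; apply: diM => //; exact: diDer.
Qed.

Lemma ritt_step J i x j k : is_di J -> J (x ^+ j.+1 * (d i x) ^+ (k + k)) ->
  J (x ^+ j * (d i x) ^+ (k.+1 + k.+1)).
Proof.
move=> hJ h.
have e1 : d i x * d i (x ^+ j.+1 * d i x ^+ (k + k)) =
   j.+1%:R * (x ^+ j * d i x ^+ (k.+1 + k.+1)) + (k + k)%:R * d i (d i x) * (x ^+ j.+1 * d i x ^+ (k + k)).
  rewrite dM dX.
  have e2 := dXm i (d i x) (k + k).
  have e3 : d i x ^+ (k.+1 + k.+1) = d i x * d i x * d i x ^+ (k + k) by rewrite addSn addnS !exprS mulrA.
  rewrite e3 exprS.
  rewrite mulrDr (mulrCA (d i x) (x * x ^+ j)) e2. rnorm; ring.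
have h2 : J (j.+1%:R * (x ^+ j * d i x ^+ (k.+1 + k.+1))).
  have -> : j.+1%:R * (x ^+ j * d i x ^+ (k.+1 + k.+1)) =
    d i x * d i (x ^+ j.+1 * d i x ^+ (k + k)) - (k + k)%:R * d i (d i x) * (x ^+ j.+1 * d i x ^+ (k + k)).
    by rewrite e1 addrK.
  apply: diB => //; apply: diM => //; exact: diDer.
case: (hQ j) => w hw.
have -> : x ^+ j * d i x ^+ (k.+1 + k.+1) = w * (j.+1%:R * (x ^+ j * d i x ^+ (k.+1 + k.+1))).
  by rewrite mulrA (mulrC w) hw mul1r.
exact: diM.
Qed.

Lemma ritt_lemma J i x n : is_di J -> J (x ^+ n) -> J ((d i x) ^+ (n + n)).
Proof.
move=> hJ hx.
suff H : forall k j, (j + k)%N = n -> J (x ^+ j * (d i x) ^+ (k + k)).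
  by have := H n 0%N (add0n n); rewrite expr0 mul1r.
elim=> [|k IH] j hjk.
  by rewrite addn0 in hjk; rewrite addn0 expr0 mulr1 hjk.
apply: ritt_step => //; apply: IH; by rewrite addSn -addnS.
Qed.

Lemma rad_di J : is_di J -> is_di (rad J).
Proof.
move=> hJ.
split; first by exists 1%N; rewrite expr1; exact: di0.
split.
  move=> x y [n hn] [k hk]; exists (n + k)%N.
  rewrite exprDn; apply: di_sum => // i _; apply: diMn => //.
  case: (leqP k i) => hi.
    apply: diM => //; exact: diXle hk.
  apply: diMr => //; apply: diXle hn => //.
  rewrite leq_subRL; last by apply: leq_trans (ltnW hi) _; rewrite leq_addl.
  by rewrite addnC leq_add2l ltnW.
split.
  move=> r x [n hn]; exists n; rewrite exprMn; exact: diM.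
move=> i x [n hn]; exists (n + n)%N; exact: ritt_lemma.
Qed.

Notation pt := (Xsp d).
Lemma pt_di (q : pt) : is_di (sval q).
Proof.
case: q => P /= [_ [h0 [hadd [hopp [hmul [h1 [hpr hder]]]]]]] /=.
split => //; split => //; split; last by [].
by move=> r x hx; apply: hmul.
Qed.
Lemma pt1 (q : pt) : ~ sval q 1.
Proof. by case: q => P /= [_ [h0 [hadd [hopp [hmul [h1 [hpr hder]]]]]]]. Qed.
Lemma ptpr (q : pt) x y : sval q (x * y) -> sval q x \/ sval q y.
Proof. case: q => P /= [_ [h0 [hadd [hopp [hmul [h1 [hpr hder]]]]]]] /= h; exact: hpr. Qed.
Lemma nqM (q : pt) x y : ~ sval q x -> ~ sval q y -> ~ sval q (x * y).
Proof. by move=> hx hy /ptpr []. Qed.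
Lemma nqX (q : pt) x n : ~ sval q x -> ~ sval q (x ^+ n).
Proof. move=> hx; elim: n => [|n IH]; [rewrite expr0; exact: pt1|rewrite exprS; exact: nqM]. Qed.

Definition mkpt (P : R -> Prop) (hP : is_di P) (h1 : ~ P 1)
  (hpr : forall x y, P (x * y) -> P x \/ P y) : pt.
Proof.
exists P; rewrite /is_dprime /=.
split => //; split; first exact: di0.
split; first by move=> x y; exact: diD.
split; first by move=> x; exact: diN.
split; first by move=> r x _; exact: diM.
split => //; split; first by move=> x y _ _; exact: hpr.
by move=> i x; exact: diDer.
Defined.

Lemma NS (J : R -> Prop) y : is_di J -> (forall n, ~ J (y ^+ n)) ->
  exists q : pt, (forall z, J z -> sval q z) /\ ~ sval q y.
Proof.
move=> hJ hy.
pose Fam := fun K => is_di K /\ zsub J K /\ (forall n, ~ K (y ^+ n)).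
have FamJ : Fam J by split => //; split => // z.
have Famub : forall C, (forall K, C K -> Fam K) -> zchain C -> (exists K, C K) -> Fam (zunion C).
  move=> C hC hch [K0 CK0].
  split; last split.
  - split; first by exists K0; split => //; case: (hC K0 CK0) => h _; exact: di0.
    split.
      move=> x z [K1 [C1 x1]] [K2 [C2 z2]].
      case: (hch K1 K2 C1 C2) => hs.
        exists K2; split => //; apply: diD; [by case: (hC K2 C2)|exact: hs|done].
      exists K1; split => //; apply: diD; [by case: (hC K1 C1)|done|exact: hs].
    split.
      move=> r x [K1 [C1 x1]]; exists K1; split => //; apply: diM => //; by case: (hC K1 C1).
    move=> i x [K1 [C1 x1]]; exists K1; split => //; apply: diDer => //; by case: (hC K1 C1).
  - move=> z jz; exists K0; split => //; case: (hC K0 CK0) => _ [h _]; exact: h.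
  - move=> n [K1 [C1 h]]; case: (hC K1 C1) => _ [_ h']; exact: (h' n).
have FamJsub : forall K, Fam K -> zsub J K by move=> K [_ [h _]].
case: (zorn FamJ Famub FamJsub) => M [[hM [JM yM]] Mmax].
have Mrad : forall x n, M (x ^+ n) -> M x.
  move=> x n hx.
  have FR : Fam (rad M).
    split; first exact: rad_di.
    split; first by move=> z jz; exists 1%N; rewrite expr1; apply: JM.
    move=> k [l hl]; apply: (yM (k * l)%N); by rewrite exprM.
  apply: (Mmax _ FR); last by exists n.
  by move=> z hz; exists 1%N; rewrite expr1.
have M1 : ~ M 1 by move=> h; apply: (yM 0%N); rewrite expr0.
have Mpr : forall a b, M (a * b) -> M a \/ M b.
  move=> a b hab; apply: NNPP => hn.
  have na : ~ M a by move=> h; apply: hn; left.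
  have nb : ~ M b by move=> h; apply: hn; right.
  pose Ka := DI (fun z => M z \/ z = a).
  pose Kb := DI (fun z => M z \/ z = b).
  have notF : forall c, ~ M c -> exists n, DI (fun z => M z \/ z = c) (y ^+ n).
    move=> c nc; apply: NNPP => hne.
    have FK : Fam (DI (fun z => M z \/ z = c)).
      split; first exact: DI_di.
      split; first by move=> z jz; apply: DI_incl; left; apply: JM.
      move=> n h; apply: hne; by exists n.
    apply: nc; apply: (Mmax _ FK); last by apply: DI_incl; right.
    by move=> z hz; apply: DI_incl; left.
  case: (notF a na) => n hn'; case: (notF b nb) => k hk.
  have S1 : forall w, Kb w -> M (a * w).
    move=> w hw; apply: (@DI_min _ (fun w => M (a * w)) w _ _ hw).
      split; first by rewrite mulr0; exact: di0.
      split; first by move=> x z hx hz; rewrite mulrDr; exact: diD.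
      split; first by move=> r x hx; rewrite mulrCA; exact: diM.
      move=> i x hx; apply: di_rad_der => //.
      move=> x0 h; exact: Mrad h.
    move=> z [hz|->]; [exact: diM|exact: hab].
  have S2 : forall z, Ka z -> forall w, Kb w -> M (z * w).
    move=> z hz0; apply: (@DI_min _ (fun z => forall w, Kb w -> M (z * w)) z _ _ hz0).
      split; first by move=> w _; rewrite mul0r; exact: di0.
      split; first by move=> x z' hx hz w hw; rewrite mulrDl; apply: diD => //; [exact: hx|exact: hz].
      split; first by move=> r x hx w hw; rewrite -mulrA; apply: diM => //; exact: hx.
      move=> i x hx w hw.
      have -> : d i x * w = d i (x * w) - x * d i w by rewrite dM addrK.
      apply: diB => //; first by apply: diDer => //; exact: hx.
      apply: hx; exact: (diDer (DI_di _)).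
    move=> z' [hz|->] w hw; first by rewrite mulrC; apply: diM.
    exact: S1.
  apply: (yM (n + k)%N); rewrite exprD; exact: S2.
exists (mkpt hM M1 Mpr); split => //=.
by move=> h; apply: (yM 1%N); rewrite expr1.
Qed.

Lemma ann_nil a x : (forall q : pt, ~ sval q x -> exists u, ~ sval q u /\ u * a = 0) ->
  exists M, (x * a) ^+ M = 0.
Proof.
move=> h.
pose Ann := fun z : R => z * a = 0.
have [n hn] : exists n, DI Ann (x ^+ n).
  apply: NNPP => hne.
  have hy : forall n, ~ DI Ann (x ^+ n) by move=> n hn; apply: hne; exists n.
  case: (NS (DI_di Ann) hy) => q [hq nx].
  case: (h q nx) => u [nu hu]; apply: nu; apply: hq; exact: DI_incl.
pose S := fun z => exists k, z * a ^+ k = 0.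
have hS : is_di S.
  split; first by exists 0%N; rewrite mul0r.
  split; first by move=> z1 z2 [k1 h1] [k2 h2]; exists (k1 + k2)%N;
    rewrite exprD mulrDl mulrA h1 mul0r mulrCA h2 mulr0 addr0.
  split; first by move=> r z [k hk]; exists k; rewrite -mulrA hk mulr0.
  move=> i z [k hk]; exists k.+1.
  have h0 := congr1 (d i) hk; rewrite d0 dM in h0.
  have e : a * d i (a ^+ k) = k%:R * a ^+ k * d i a by apply: dXm.
  have -> : d i z * a ^+ k.+1 = a * (d i z * a ^+ k + z * d i (a ^+ k)) - k%:R * d i a * (z * a ^+ k).
    rewrite mulrDr (mulrCA a z) e exprS. rnorm; ring.
  by rewrite h0 hk !mulr0 subr0.
have [k hk] : S (x ^+ n) by apply: (DI_min hS) hn => z hz; exists 1%N; rewrite expr1.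
exists (n + k)%N.
rewrite exprMn.
have -> : x ^+ (n + k) * a ^+ (n + k) = (x ^+ n * a ^+ k) * (x ^+ k * a ^+ n).
  rewrite !exprD. rnorm; ring.
by rewrite hk mul0r.
Qed.

Lemma cover_fin (E : R -> Prop) : (forall q : pt, exists x, E x /\ ~ sval q x) ->
  exists l : seq R, (forall x, List.In x l -> E x) /\
    forall q : pt, exists x, List.In x l /\ ~ sval q x.
Proof.
move=> hE.
have h1 : DI E 1.
  apply: NNPP => hn.
  have hy : forall n, ~ DI E (1 ^+ n) by move=> n; rewrite expr1n.
  case: (NS (DI_di E) hy) => q [hq nq].
  case: (hE q) => x [Ex nx]; apply: nx; apply: hq; exact: DI_incl.
pose F := fun z => exists l : seq R, (forall x, List.In x l -> E x) /\ DI (fun y => List.In y l) z.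
have mono : forall (S S' : R -> Prop) z, (forall y, S y -> S' y) -> DI S z -> DI S' z.
  move=> S S' z hs h J hJ hS'; apply: h => // y /hs; exact: hS'.
have hF : is_di F.
  split; first by exists [::]; split => //; exact: di0 (DI_di _).
  split.
    move=> x y [l1 [E1 h1']] [l2 [E2 h2']]; exists (l1 ++ l2); split.
      move=> z hz; case: (List.in_app_or _ _ _ hz) => hz'; [exact: E1|exact: E2].
    apply: (diD (DI_di _)).
      by apply: (mono _ _ _ _ h1') => z hz; apply: List.in_or_app; left.
    by apply: (mono _ _ _ _ h2') => z hz; apply: List.in_or_app; right.
  split; first by move=> r x [l [El hl]]; exists l; split => //; exact: (diM (DI_di _)).
  by move=> i x [l [El hl]]; exists l; split => //; exact: (diDer (DI_di _)).
have [l [El hl]] : F 1.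
  apply: (DI_min hF) h1 => x Ex; exists [:: x]; split; first by move=> z [<-|[]].
  by apply: DI_incl; left.
exists l; split => // q.
apply: NNPP => hn; apply: (@pt1 q); apply: (DI_min (@pt_di q)) hl => y hy.
apply: NNPP => ny; apply: hn; by exists y.
Qed.

Lemma lc_trans (u v a b c s t w : R) : u * (a * t - b * s) = 0 -> v * (a * w - c * s) = 0 ->
  (u * v * s) * (b * w - c * t) = 0.
Proof.
move=> h1 h2.
have -> : u * v * s * (b * w - c * t) = (u * t) * (v * (a * w - c * s)) - (w * v) * (u * (a * t - b * s)).
  rnorm; ring.
by rewrite h1 h2 !mulr0 subrr.
Qed.

Lemma lc_refl (q : pt) a s : ~ sval q s -> lclass (sval q) a s (a, s).
Proof. move=> hs; split => //; exists 1; split; [exact: (@pt1 q)|by rewrite subrr mulr0]. Qed.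

Lemma lc_eqI (q : pt) a s b t : ~ sval q s -> ~ sval q t ->
  (exists u, ~ sval q u /\ u * (a * t - b * s) = 0) -> lclass (sval q) a s = lclass (sval q) b t.
Proof.
move=> hs ht [u [nu hu]]; apply: pred_ext => [[c w]]; rewrite /lclass /=; split.
- move=> [nw [v [nv hv]]]; split => //; exists (u * v * s); split; first exact: (nqM (nqM nu nv) hs).
  exact: lc_trans hu hv.
- move=> [nw [v [nv hv]]]; split => //; exists (u * v * t); split; first exact: (nqM (nqM nu nv) ht).
  apply: (lc_trans (a := b) (b := a)) hv.
  by rewrite -opprB mulrN hu oppr0.
Qed.

Lemma lc_eqE (q : pt) a s b t : ~ sval q s -> ~ sval q t ->
  lclass (sval q) a s = lclass (sval q) b t -> exists u, ~ sval q u /\ u * (a * t - b * s) = 0.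
Proof. move=> hs ht e; have := lc_refl b ht; rewrite -e; by case. Qed.

Lemma lift2_lc (q : pt) op a s b t : ~ sval q s -> ~ sval q t ->
  (forall a s b t, ~ sval q s -> ~ sval q t -> ~ sval q (op a s b t).2) ->
  (forall a s b t a' s' b' t' u1 u2, ~ sval q s -> ~ sval q t -> ~ sval q s' -> ~ sval q t' ->
     ~ sval q u1 -> ~ sval q u2 -> u1 * (a * s' - a' * s) = 0 -> u2 * (b * t' - b' * t) = 0 ->
     exists u, ~ sval q u /\ u * ((op a s b t).1 * (op a' s' b' t').2 - (op a' s' b' t').1 * (op a s b t).2) = 0) ->
  lift2 op (sval q) (lclass (sval q) a s) (lclass (sval q) b t) = lclass (sval q) (op a s b t).1 (op a s b t).2.
Proof.
move=> hs ht hop hresp; apply: pred_ext => xy; split.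
- move=> [a' [s' [b' [t' [hs' ht' e1 e2 hl]]]]].
  have <- // : lclass (sval q) (op a' s' b' t').1 (op a' s' b' t').2 = lclass (sval q) (op a s b t).1 (op a s b t).2.
  apply: lc_eqI; [exact: (hop _ _ _ _ hs' ht')|exact: (hop _ _ _ _ hs ht)|].
  case: (lc_eqE hs' hs (esym e1)) => u1 [n1 h1].
  case: (lc_eqE ht' ht (esym e2)) => u2 [n2 h2].
  exact: (hresp a' s' b' t' a s b t u1 u2).
- move=> h; exists a, s, b, t; split => //.
Qed.

Lemma lift1_lc (q : pt) op a s : ~ sval q s ->
  (forall a s, ~ sval q s -> ~ sval q (op a s).2) ->
  (forall a s a' s' u, ~ sval q s -> ~ sval q s' -> ~ sval q u -> u * (a * s' - a' * s) = 0 ->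
     exists v, ~ sval q v /\ v * ((op a s).1 * (op a' s').2 - (op a' s').1 * (op a s).2) = 0) ->
  lift1 op (sval q) (lclass (sval q) a s) = lclass (sval q) (op a s).1 (op a s).2.
Proof.
move=> hs hop hresp; apply: pred_ext => xy; split.
- move=> [a' [s' [hs' e1 hl]]].
  have <- // : lclass (sval q) (op a' s').1 (op a' s').2 = lclass (sval q) (op a s).1 (op a s).2.
  apply: lc_eqI; [exact: (hop _ _ hs')|exact: (hop _ _ hs)|].
  case: (lc_eqE hs' hs (esym e1)) => u1 [n1 h1].
  exact: (hresp a' s' a s u1).
- move=> h; exists a, s; split => //.
Qed.

Lemma cadd_lc (q : pt) a s b t : ~ sval q s -> ~ sval q t ->
  cadd (sval q) (lclass (sval q) a s) (lclass (sval q) b t) = lclass (sval q) (a * t + b * s) (s * t).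
Proof.
move=> hs ht; rewrite /cadd; apply: (lift2_lc (op := fun a s b t => (a * t + b * s, s * t))) => //=.
  move=> ? ? ? ? h1 h2; exact: nqM.
move=> a0 s0 b0 t0 a1 s1 b1 t1 u1 u2 _ _ _ _ n1 n2 h1 h2.
exists (u1 * u2); split; first exact: nqM.
have -> : u1 * u2 * ((a0 * t0 + b0 * s0) * (s1 * t1) - (a1 * t1 + b1 * s1) * (s0 * t0)) =
  (u2 * t0 * t1) * (u1 * (a0 * s1 - a1 * s0)) + (u1 * s0 * s1) * (u2 * (b0 * t1 - b1 * t0)).
  rnorm; ring.
by rewrite h1 h2 !mulr0 addr0.
Qed.

Lemma cmul_lc (q : pt) a s b t : ~ sval q s -> ~ sval q t ->
  cmul (sval q) (lclass (sval q) a s) (lclass (sval q) b t) = lclass (sval q) (a * b) (s * t).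
Proof.
move=> hs ht; rewrite /cmul; apply: (lift2_lc (op := fun a s b t => (a * b, s * t))) => //=.
  move=> ? ? ? ? h1 h2; exact: nqM.
move=> a0 s0 b0 t0 a1 s1 b1 t1 u1 u2 _ _ _ _ n1 n2 h1 h2.
exists (u1 * u2); split; first exact: nqM.
have -> : u1 * u2 * (a0 * b0 * (s1 * t1) - a1 * b1 * (s0 * t0)) =
  (u2 * b0 * t1) * (u1 * (a0 * s1 - a1 * s0)) + (u1 * a1 * s0) * (u2 * (b0 * t1 - b1 * t0)).
  rnorm; ring.
by rewrite h1 h2 !mulr0 addr0.
Qed.

Lemma copp_lc (q : pt) a s : ~ sval q s ->
  copp (sval q) (lclass (sval q) a s) = lclass (sval q) (- a) s.
Proof.
move=> hs; rewrite /copp; apply: (lift1_lc (op := fun a s => (- a, s))) => //=.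
move=> a0 s0 a1 s1 u _ _ nu h; exists u; split => //.
have -> : u * (- a0 * s1 - - a1 * s0) = - (u * (a0 * s1 - a1 * s0)) by rnorm; ring.
by rewrite h oppr0.
Qed.

Lemma cder_lc (q : pt) i a s : ~ sval q s ->
  cder d i (sval q) (lclass (sval q) a s) = lclass (sval q) (d i a * s - a * d i s) (s * s).
Proof.
move=> hs; rewrite /cder; apply: (lift1_lc (op := fun a s => (d i a * s - a * d i s, s * s))) => //=.
  move=> ? ? h; exact: nqM.
move=> a0 s0 a1 s1 u _ _ nu h; exists (u * u); split; first exact: nqM.
have h0 := congr1 (d i) h; rewrite d0 dM dB !dM in h0.
have h3 : u * u * (d i a0 * s1 + a0 * d i s1 - (d i a1 * s0 + a1 * d i s0)) = 0.
  have -> : u * u * (d i a0 * s1 + a0 * d i s1 - (d i a1 * s0 + a1 * d i s0)) =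
    u * (d i u * (a0 * s1 - a1 * s0) + u * (d i a0 * s1 + a0 * d i s1 - (d i a1 * s0 + a1 * d i s0)))
    - d i u * (u * (a0 * s1 - a1 * s0)) by rnorm; ring.
  by rewrite h0 h !mulr0 subrr.
have -> : u * u * ((d i a0 * s0 - a0 * d i s0) * (s1 * s1) - (d i a1 * s1 - a1 * d i s1) * (s0 * s0)) =
  s0 * s1 * (u * u * (d i a0 * s1 + a0 * d i s1 - (d i a1 * s0 + a1 * d i s0)))
  - (s1 * d i s0 + s0 * d i s1) * u * (u * (a0 * s1 - a1 * s0)) by rnorm; ring.
by rewrite h3 h !mulr0 subrr.
Qed.

Lemma lc_eqR (q : pt) a s b t : ~ sval q s -> ~ sval q t -> a * t = b * s ->
  lclass (sval q) a s = lclass (sval q) b t.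
Proof. move=> hs ht e; apply: lc_eqI => //; exists 1; split; [exact: (@pt1 q)|by rewrite e subrr mulr0]. Qed.

Lemma nqMl (q : pt) x y : ~ sval q (x * y) -> ~ sval q x.
Proof. move=> h hx; apply: h; exact: (diMr (@pt_di q)). Qed.
Lemma nqMr (q : pt) x y : ~ sval q (x * y) -> ~ sval q y.
Proof. move=> h hx; apply: h; exact: (diM (@pt_di q)). Qed.

Ltac nq := repeat first [assumption | exact: (@pt1 _) | apply nqM | apply nqX].

Notation sec := (rsec d).
Definition OXadd (f g : sec) : sec := fun q => cadd (sval q) (f q) (g q).
Definition OXmul (f g : sec) : sec := fun q => cmul (sval q) (f q) (g q).
Definition OXopp (f : sec) : sec := fun q => copp (sval q) (f q).
Definition OXder i (f : sec) : sec := fun q => cder d i (sval q) (f q).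
Definition iota (a : R) : sec := canon_iota d a.

Definition rep (f : sec) (q : pt) a s := ~ sval q s /\ f q = lclass (sval q) a s.
Definition reg (f : sec) (p : pt) := exists e a b, ~ sval p e /\ forall q : pt, ~ sval q e -> rep f q a b.

Lemma OX_reg f : @in_OX _ _ d f -> forall p, reg f p.
Proof.
move=> hf p; case: (hf p I) => _ [W [[E hE] Wp _ [a [b hab]]]].
have [e [Ee ne]] : exists e, E e /\ ~ sval p e.
  apply: NNPP => hn; apply: ((proj2 (hE p)) _ Wp) => x Ex; apply: NNPP => nx; apply: hn; by exists x.
exists e, a, b; split => // q nq.
have Wq : W q.
  apply: NNPP => nW; apply: nq; exact: ((proj1 (hE q)) nW).
exact: hab.
Qed.

Lemma reg_OX f : (forall p, reg f p) -> @in_OX _ _ d f.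
Proof.
move=> h p _; case: (h p) => e [a [b [ne hr]]].
split; first by case: (hr p ne) => nb ->; exists a, b.
exists (fun q => ~ sval q e); split => //.
- exists (fun x => x = e) => P; split.
  + by move=> nn x ->; apply: NNPP.
  + by move=> hx hn; apply: hn; apply: hx.
- by exists a, b => q /hr [].
Qed.

Lemma rep_at f p : @in_OX _ _ d f -> exists a s, rep f p a s.
Proof. move=> hf; case: (OX_reg hf p) => e [a [b [ne hr]]]; exists a, b; exact: hr. Qed.

Lemma in_OX_iota a : @in_OX _ _ d (iota a).
Proof. apply: reg_OX => p; exists 1, a, 1; split; first exact: (@pt1 p). by move=> q _; split => //; exact: (@pt1 q). Qed.

Lemma in_OX_add f g : @in_OX _ _ d f -> @in_OX _ _ d g -> @in_OX _ _ d (OXadd f g).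
Proof.
move=> hf hg; apply: reg_OX => p.
case: (OX_reg hf p) => e1 [a1 [b1 [n1 h1]]]; case: (OX_reg hg p) => e2 [a2 [b2 [n2 h2]]].
exists (e1 * e2), (a1 * b2 + a2 * b1), (b1 * b2); split; first by nq.
move=> q nq12; have nq1 := nqMl nq12; have nq2 := nqMr nq12.
case: (h1 q nq1) => nb1 e1'; case: (h2 q nq2) => nb2 e2'.
split; first by nq.
by rewrite /OXadd e1' e2' cadd_lc.
Qed.

Lemma in_OX_mul f g : @in_OX _ _ d f -> @in_OX _ _ d g -> @in_OX _ _ d (OXmul f g).
Proof.
move=> hf hg; apply: reg_OX => p.
case: (OX_reg hf p) => e1 [a1 [b1 [n1 h1]]]; case: (OX_reg hg p) => e2 [a2 [b2 [n2 h2]]].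
exists (e1 * e2), (a1 * a2), (b1 * b2); split; first by nq.
move=> q nq12; have nq1 := nqMl nq12; have nq2 := nqMr nq12.
case: (h1 q nq1) => nb1 e1'; case: (h2 q nq2) => nb2 e2'.
split; first by nq.
by rewrite /OXmul e1' e2' cmul_lc.
Qed.

Lemma in_OX_opp f : @in_OX _ _ d f -> @in_OX _ _ d (OXopp f).
Proof.
move=> hf; apply: reg_OX => p.
case: (OX_reg hf p) => e1 [a1 [b1 [n1 h1]]].
exists e1, (- a1), b1; split => // q nq1.
case: (h1 q nq1) => nb1 e1'; split => //.
by rewrite /OXopp e1' copp_lc.
Qed.

Lemma in_OX_der i f : @in_OX _ _ d f -> @in_OX _ _ d (OXder i f).
Proof.
move=> hf; apply: reg_OX => p.
case: (OX_reg hf p) => e1 [a1 [b1 [n1 h1]]].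
exists e1, (d i a1 * b1 - a1 * d i b1), (b1 * b1); split => // q nq1.
case: (h1 q nq1) => nb1 e1'; split; first by nq.
by rewrite /OXder e1' cder_lc.
Qed.

Notation OX := (OX_dring d).
Definition zero_sec : sec := iota 0.
Definition one_sec : sec := iota 1.
Section Qfacts.
Variable Q : dspec OX.
Lemma Qmem f : sval Q f -> @in_OX _ _ d f.
Proof. by case: Q => P /= [h _]; apply: h. Qed.
Lemma Q0 : sval Q zero_sec.
Proof. by case: Q => P /= [_ [h _]]. Qed.
Lemma Qadd f g : sval Q f -> sval Q g -> sval Q (OXadd f g).
Proof. case: Q => P /= [_ [_ [h _]]]; exact: h. Qed.
Lemma Qopp f : sval Q f -> sval Q (OXopp f).
Proof. case: Q => P /= [_ [_ [_ [h _]]]]; exact: h. Qed.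
Lemma Qmul r f : @in_OX _ _ d r -> sval Q f -> sval Q (OXmul r f).
Proof. case: Q => P /= [_ [_ [_ [_ [h _]]]]]; exact: h. Qed.
Lemma Q1 : ~ sval Q one_sec.
Proof. by case: Q => P /= [_ [_ [_ [_ [_ [h _]]]]]]. Qed.
Lemma Qpr f g : @in_OX _ _ d f -> @in_OX _ _ d g -> sval Q (OXmul f g) -> sval Q f \/ sval Q g.
Proof. case: Q => P /= [_ [_ [_ [_ [_ [_ [h _]]]]]]]; exact: h. Qed.
Lemma Qder i f : sval Q f -> sval Q (OXder i f).
Proof. case: Q => P /= [_ [_ [_ [_ [_ [_ [_ h]]]]]]]; exact: h. Qed.
End Qfacts.

Lemma iota_add x y : OXadd (iota x) (iota y) = iota (x + y).
Proof.
apply: functional_extensionality => q; rewrite /OXadd /iota /canon_iota cadd_lc; try nq.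
apply: lc_eqR; try nq. rnorm; ring.
Qed.
Lemma iota_mul x y : OXmul (iota x) (iota y) = iota (x * y).
Proof.
apply: functional_extensionality => q; rewrite /OXmul /iota /canon_iota cmul_lc; try nq.
apply: lc_eqR; try nq. rnorm; ring.
Qed.
Lemma iota_opp x : OXopp (iota x) = iota (- x).
Proof.
apply: functional_extensionality => q; rewrite /OXopp /iota /canon_iota copp_lc //; nq.
Qed.
Lemma iota_der i x : OXder i (iota x) = iota (d i x).
Proof.
apply: functional_extensionality => q; rewrite /OXder /iota /canon_iota cder_lc; try nq.
apply: lc_eqR; try nq. rewrite d1. rnorm; ring.
Qed.

Lemma istar_di (Q : dspec OX) : is_di (fun a => sval Q (iota a)).
Proof.
split; first exact: Q0.
split; first by move=> x y hx hy; rewrite -iota_add; exact: Qadd.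
split; first by move=> r x hx; rewrite -iota_mul; apply: Qmul => //; exact: in_OX_iota.
by move=> i x hx; rewrite -iota_der; exact: Qder.
Qed.
Lemma istar_pr (Q : dspec OX) x y : sval Q (iota (x * y)) -> sval Q (iota x) \/ sval Q (iota y).
Proof. rewrite -iota_mul; apply: Qpr; exact: in_OX_iota. Qed.
Definition istar (Q : dspec OX) : pt := mkpt (istar_di Q) (@Q1 Q) (@istar_pr Q).

Definition mA (p : pt) (c : R * R -> Prop) :=
  exists a s, ~ sval p s /\ sval p a /\ c = lclass (sval p) a s.

Lemma mA_lc (p : pt) a s : ~ sval p s -> (mA p (lclass (sval p) a s) <-> sval p a).
Proof.
move=> hs; split; last by move=> ha; exists a, s.
move=> [a' [s' [hs' [ha' e]]]].
case: (lc_eqE hs hs' e) => u [nu hu].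
have h : sval p (u * a * s').
  have -> : u * a * s' = u * (a * s' - a' * s) + u * s * a' by rnorm; ring.
  apply: (diD (@pt_di p)); first by rewrite hu; exact: (di0 (@pt_di p)).
  exact: (diM (@pt_di p)).
case: (ptpr h) => h1.
  case: (ptpr h1) => h2 //; by exfalso; apply: nu.
by exfalso; apply: hs'.
Qed.

Definition QP (p : pt) (f : sec) := @in_OX _ _ d f /\ mA p (f p).

Section QPfacts.
Variable p : pt.
Lemma QP_zero : QP p zero_sec.
Proof. split; first exact: in_OX_iota. apply/mA_lc; [nq|exact: (di0 (@pt_di p))]. Qed.
Lemma QP_add f g : QP p f -> QP p g -> QP p (OXadd f g).
Proof.
move=> [hf [a [s [hs [ha ef]]]]] [hg [b [t [ht [hb eg]]]]]; split; first exact: in_OX_add.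
rewrite /OXadd ef eg cadd_lc //; apply/mA_lc; first by nq.
apply: (diD (@pt_di p)); exact: (diMr (@pt_di p)).
Qed.
Lemma QP_opp f : QP p f -> QP p (OXopp f).
Proof.
move=> [hf [a [s [hs [ha ef]]]]]; split; first exact: in_OX_opp.
rewrite /OXopp ef copp_lc //; apply/mA_lc => //; exact: (diN (@pt_di p)).
Qed.
Lemma QP_mul r f : @in_OX _ _ d r -> QP p f -> QP p (OXmul r f).
Proof.
move=> hr [hf [a [s [hs [ha ef]]]]]; split; first exact: in_OX_mul.
case: (rep_at p hr) => c [w [hw er]].
rewrite /OXmul ef er cmul_lc //; apply/mA_lc; first by nq.
exact: (diM (@pt_di p)).
Qed.
Lemma QP_one : ~ QP p one_sec.
Proof. move=> [_ h]; move: h; rewrite /one_sec /iota /canon_iota; move/mA_lc => h; apply: (@pt1 p); apply: h; nq. Qed.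
Lemma QP_pr f g : @in_OX _ _ d f -> @in_OX _ _ d g -> QP p (OXmul f g) -> QP p f \/ QP p g.
Proof.
move=> hf hg [_ h].
case: (rep_at p hf) => a [s [hs ef]]; case: (rep_at p hg) => b [t [ht eg]].
move: h; rewrite /OXmul ef eg cmul_lc // => /mA_lc h.
have : sval p (a * b) by apply: h; nq.
case/ptpr => h'; [left|right]; split => //; [rewrite ef|rewrite eg]; exact/mA_lc.
Qed.
Lemma QP_der i f : QP p f -> QP p (OXder i f).
Proof.
move=> [hf [a [s [hs [ha ef]]]]]; split; first exact: in_OX_der.
rewrite /OXder ef cder_lc //; apply/mA_lc; first by nq.
apply: (diB (@pt_di p)); last exact: (diMr (@pt_di p)).
apply: (diMr (@pt_di p)); exact: (diDer (@pt_di p)).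
Qed.
End QPfacts.

Lemma QP_dprime (p : pt) : is_dprime (D := OX) (QP p).
Proof.
split; first by move=> f [].
split; first exact: QP_zero.
split; first exact: QP_add.
split; first exact: QP_opp.
split; first exact: QP_mul.
split; first exact: QP_one.
split; first exact: QP_pr.
exact: QP_der.
Qed.
Definition qstar (p : pt) : dspec OX := exist _ (QP p) (QP_dprime p).

Fixpoint OXpow (h : sec) (n : nat) : sec :=
  match n with 0 => one_sec | n.+1 => OXmul h (OXpow h n) end.

Lemma in_OX_pow h n : @in_OX _ _ d h -> @in_OX _ _ d (OXpow h n).
Proof. move=> hh; elim: n => [|n IH] /=; [exact: in_OX_iota|exact: in_OX_mul]. Qed.

Lemma Qpow (Q : dspec OX) h n : @in_OX _ _ d h -> sval Q (OXpow h n) -> sval Q h.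
Proof.
move=> hh; elim: n => [|n IH] /=; first by move=> /Q1.
move=> H; case: (Qpr hh (in_OX_pow n hh) H) => //; exact: IH.
Qed.

Lemma pow_lc h (q : pt) c w n : ~ sval q w -> h q = lclass (sval q) c w ->
  OXpow h n q = lclass (sval q) (c ^+ n) (w ^+ n).
Proof.
move=> hw e; elim: n => [|n IH] /=; first by rewrite !expr0.
by rewrite /OXmul IH e cmul_lc -?exprS //; nq.
Qed.

Lemma KL (Q : dspec OX) g e : @in_OX _ _ d g ->
  (forall q : pt, ~ sval q e -> g q = lclass (sval q) 0 1) -> sval Q (OXmul (iota e) g).
Proof.
move=> hg hz.
set h := OXmul (iota e) g.
have hh : @in_OX _ _ d h by apply: in_OX_mul => //; exact: in_OX_iota.
pose nil_at (q : pt) M := exists c w u, [/\ ~ sval q w, h q = lclass (sval q) c w, ~ sval q u & u * c ^+ M = 0].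
have mono : forall q M M', (M <= M')%N -> nil_at q M -> nil_at q M'.
  move=> q M M' le [c [w [u [hw e1 hu e2]]]]; exists c, w, u; split => //.
  by rewrite -(subnK le) exprD mulrCA e2 mulr0.
have nil0 : forall q M, nil_at q M -> OXpow h M q = lclass (sval q) 0 1.
  move=> q M [c [w [u [hw e1 hu e2]]]]; rewrite (pow_lc _ hw e1).
  apply: lc_eqI; try nq.
  exists u; split => //; by rewrite mulr1 mul0r subr0.
pose E := fun x => exists a b, forall q : pt, ~ sval q x -> rep g q a b.
have cov : forall q : pt, exists x, E x /\ ~ sval q x.
  move=> q; case: (OX_reg hg q) => e' [a [b [ne hr]]]; exists e'; split => //; by exists a, b.
have step1 : forall x, E x -> exists M, forall q : pt, ~ sval q x -> nil_at q M.
  move=> x [a [b hab]].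
  have [M hM] : exists M, (x * e * a) ^+ M = 0.
    apply: ann_nil => q nxe.
    have nx := nqMl nxe; have ne := nqMr nxe.
    case: (hab q nx) => nb ega; rewrite (hz q ne) in ega.
    case: (lc_eqE nb (@pt1 q) (esym ega)) => u [nu hu].
    exists u; split => //; move: hu; by rewrite mulr1 mul0r subr0.
  exists M => q nx; exists (e * a), (1 * b), (x ^+ M).
  case: (hab q nx) => nb ega.
  split; first by nq.
  - by rewrite /h /OXmul ega /iota /canon_iota cmul_lc //; nq.
  - by nq.
  - by rewrite -exprMn mulrA.
case: (cover_fin cov) => l [El hl].
have [M hM] : exists M, forall x, List.In x l -> forall q : pt, ~ sval q x -> nil_at q M.
  elim: l El {hl} => [|x l IH] El; first by exists 0%N.
  case: IH => [z hz'|M2 h2]; first by apply: El; right.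
  case: (step1 x (El x (or_introl erefl))) => M1 h1.
  exists (M1 + M2)%N => y [<-|hy] q nq'.
  - exact: (mono q M1 _ (leq_addr M2 M1) (h1 q nq')).
  - exact: (mono q M2 _ (leq_addl M1 M2) (h2 y hy q nq')).
apply: (Qpow (n := M)) => //.
have -> : OXpow h M = zero_sec.
  apply: functional_extensionality => q.
  case: (hl q) => x [lx nx]; exact: nil0 (hM x lx q nx).
exact: Q0.
Qed.

Ltac lcsimp := repeat (first [rewrite cmul_lc | rewrite cadd_lc | rewrite copp_lc | rewrite cder_lc]; try nq).

Lemma main_eq (Q : dspec OX) f : sval Q f <-> QP (istar Q) f.
Proof.
case: (classic (@in_OX _ _ d f)) => hf; last first.
  split; [by move=> /Qmem | by case].
set p := istar Q.
have hp : forall a, sval p a <-> sval Q (iota a) by [].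
case: (OX_reg hf p) => e [a [b [ne hr]]].
case: (hr p ne) => nb efp.
have eQP : QP p f <-> sval p a.
  split; first by move=> [_]; rewrite efp => /mA_lc; apply.
  by move=> ha; split => //; rewrite efp; apply/mA_lc.
rewrite eQP.
pose g := OXadd (OXmul (iota b) f) (OXopp (iota a)).
have hg : @in_OX _ _ d g.
  apply: in_OX_add; first (apply: in_OX_mul => //; exact: in_OX_iota).
  apply: in_OX_opp; exact: in_OX_iota.
have hgz : forall q : pt, ~ sval q e -> g q = lclass (sval q) 0 1.
  move=> q nq'; case: (hr q nq') => nbq efq.
  rewrite /g /OXadd /OXmul /OXopp efq /iota /canon_iota.
  lcsimp.
  apply: lc_eqR; try nq. rnorm; ring.
have hk := KL Q hg hgz.
split.
- move=> Qf.
  have H : sval Q (OXadd (OXmul (iota e) (OXmul (iota b) f)) (OXopp (OXmul (iota e) g))).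
    apply: Qadd; last exact: Qopp.
    apply: Qmul; first exact: in_OX_iota.
    apply: Qmul => //; exact: in_OX_iota.
  have E1 : OXadd (OXmul (iota e) (OXmul (iota b) f)) (OXopp (OXmul (iota e) g)) = iota (e * a).
    apply: functional_extensionality => q.
    case: (rep_at q hf) => a' [s' [hs' efq]].
    rewrite /g /OXadd /OXmul /OXopp efq /iota /canon_iota.
    lcsimp.
    apply: lc_eqR; try nq. rnorm; ring.
  rewrite E1 in H.
  have : sval p (e * a) by apply/hp.
  case/ptpr => // h; by exfalso; apply: ne.
- move=> ha.
  have H : sval Q (OXadd (OXmul (iota e) g) (OXmul (iota e) (iota a))).
    apply: Qadd => //; apply: Qmul; [exact: in_OX_iota|exact/hp].
  have E1 : OXadd (OXmul (iota e) g) (OXmul (iota e) (iota a)) = OXmul (iota (e * b)) f.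
    apply: functional_extensionality => q.
    case: (rep_at q hf) => a' [s' [hs' efq]].
    rewrite /g /OXadd /OXmul /OXopp efq /iota /canon_iota.
    lcsimp.
    apply: lc_eqR; try nq. rnorm; ring.
  rewrite E1 in H.
  case: (Qpr (in_OX_iota _) hf H) => // h.
  have : sval p (e * b) by apply/hp.
  by case/ptpr => h'; exfalso; [apply: ne|apply: nb].
Qed.

Lemma spec_eq m' (D : dring m') (P1 P2 : dspec D) : sval P1 = sval P2 -> P1 = P2.
Proof.
case: P1 => P1 h1; case: P2 => P2 h2 /= e; subst P2.
by rewrite (proof_irrelevance _ h1 h2).
Qed.

Lemma main_thm : exists iota_star : dspec OX -> dspec (ring_dring d),
    (forall Q : dspec OX, sval (iota_star Q) = fun a => sval Q (canon_iota d a))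
    /\ khomeomorphism iota_star.
Proof.
exists istar; split => //.
exists qstar; split.
- move=> Q; apply: spec_eq; apply: pred_ext => f /=.
  by rewrite (main_eq Q f).
- move=> p; apply: spec_eq; apply: pred_ext => a /=.
  split; first by move=> [_]; move/mA_lc; apply; nq.
  move=> ha; split; first exact: in_OX_iota.
  by apply/mA_lc => //; nq.
- move=> U [E hE]; exists (fun f => exists x, E x /\ f = iota x) => Q; split.
  + move=> nU f [x [Ex ->]]; exact: ((proj1 (hE (istar Q))) nU x Ex).
  + move=> h; apply: (proj2 (hE (istar Q))) => x Ex; apply: h; by exists x.
- move=> U [F hF].
  exists (fun x => forall p' : pt, ~ U (qstar p') -> sval p' x) => p; split.
  + by move=> nU x hx; apply: hx.
  + move=> h; apply: (proj2 (hF (qstar p))) => f Ff.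
    apply: NNPP => nQ.
    case: (classic (@in_OX _ _ d f)) => hf; last first.
      apply: (@pt1 p); apply: h => p' nU'.
      by exfalso; apply: hf; case: ((proj1 (hF (qstar p'))) nU' f Ff).
    case: (OX_reg hf p) => e [a [b [ne hr]]].
    case: (hr p ne) => nb efp.
    have na : ~ sval p a.
      move=> ha; apply: nQ; split => //; rewrite /= efp; exact/mA_lc.
    have : sval p (e * a).
      apply: h => p' nU'.
      have [_ hm] := (proj1 (hF (qstar p'))) nU' f Ff.
      case: (classic (sval p' e)) => he; first exact: (diMr (@pt_di p')).
      case: (hr p' he) => nb' ef'.
      rewrite ef' in hm; move/mA_lc: hm => hm.
      exact: (diM (@pt_di p')) (hm nb').
    by case/ptpr.
Qed.
End Main.

Theorem corollary3p3 (R : comNzRingType) (m : nat) (d : 'I_m -> R -> R)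
  (hd : is_diff_ring d) (hQ : ritt R) :
  exists iota_star : dspec (OX_dring d) -> dspec (ring_dring d),
    (forall Q : dspec (OX_dring d), sval (iota_star Q) = fun a => sval Q (canon_iota d a))
    /\ khomeomorphism iota_star.
Proof. exact: (main_thm hd hQ). Qed.
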